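(* Let $H$ be a finite-dimensional Hilbert space, let $C_1\subseteq H$ be a nonempty compact set and $C_2\subseteq H$ a nonempty closed set. For $i=1,2$, let $P_{C_i}:H\to C_i$ be a map such that $P_{C_i}(z)$ is a nearest point of $C_i$ to $z$ for every $z\in H$, and assume that $P_{C_2}$ is continuous. Let $x_0\in C_1$ and define sequences by $y_i=P_{C_2}(x_i)$ and $x_{i+1}=P_{C_1}(y_i)$ for $i=0,1,2,\ldots$. Then there exist $x\in C_1$ and $y=P_{C_2}(x)\in C_2$ such that $\|x-y\|=\lim_{i\to\infty}\|x_i-y_i\|$. *)

(* Defs.v *)
From HB Require Import structures.
From mathcomp Require Import all_boot all_order all_algebra.
From mathcomp Require Import all_classical all_reals all_analysis.
Set Implicit Arguments. Unset Strict Implicit. Unset Printing Implicit Defensive.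
Import Order.TTheory GRing.Theory Num.Theory.
Import numFieldNormedType.Exports.
Local Open Scope ring_scope.
Local Open Scope classical_set_scope.

(* A finite-dimensional real Hilbert space is modeled as R^n = 'rV[R]_n with
   the Euclidean norm. The topology on 'rV[R]_n (product topology) coincides
   with the Euclidean-norm topology. *)
Definition enorm (R : realType) (n : nat) (v : 'rV[R]_n) : R :=
  Num.sqrt (\sum_(i < n) (v ord0 i) ^+ 2).

Definition nearest_point_map (R : realType) (n : nat)
  (C : set 'rV[R]_n) (P : 'rV[R]_n -> 'rV[R]_n) : Prop :=
  forall z, C (P z) /\ (forall c, C c -> enorm (z - P z) <= enorm (z - c)).

(* Main.v *)
Require Import Defs.
From HB Require Import structures.
From mathcomp Require Import all_boot all_order all_algebra.
From mathcomp Require Import all_classical all_reals all_analysis.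
From mathcomp Require Import lra.
Import Order.TTheory GRing.Theory Num.Theory.
Import numFieldNormedType.Exports.
Local Open Scope ring_scope.
Local Open Scope classical_set_scope.

Lemma f_cont (R : realType) (n : nat) (P2 : 'rV[R]_n -> 'rV[R]_n) :
  continuous P2 -> continuous (fun z : 'rV[R]_n => enorm (z - P2 z)).
Proof.
move=> hP x; rewrite /enorm.
apply: continuous_comp; last exact: sqrt_continuous.
apply: (@cvg_big R _ +%R 0 xpredT (@add_continuous R^o)); first exact: nbhs_filter.
move=> i _.
have hg : (fun z : 'rV[R]_n => (z - P2 z) ord0 i) @ x --> (x - P2 x) ord0 i.
  have h1 := @cvgB R _ _ (nbhs x) _ id P2 x (P2 x) cvg_id (hP x).
  have hF : Filter (nbhs x) by exact: (@nbhs_filter _ x).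
  move: (h1 hF) => {}h1.
  have h2 := (cvg_comp _ _ h1 (@coord_continuous R 1 n ord0 i _)).
  apply: h2.
under eq_cvg do rewrite expr2.
rewrite expr2. have h3 := cvgM hg hg. apply: h3.
Qed.

Lemma enormB_sym (R : realType) (n : nat) (a b : 'rV[R]_n) :
  enorm (a - b) = enorm (b - a).
Proof.
rewrite /enorm; congr Num.sqrt; apply: eq_bigr => i _.
by rewrite -opprB mxE sqrrN.
Qed.

Theorem mainTheorem6 (R : realType) (n : nat)
  (C1 C2 : set 'rV[R]_n)
  (hC1ne : C1 !=set0) (hC1 : compact C1)
  (hC2ne : C2 !=set0) (hC2 : closed C2)
  (P1 P2 : 'rV[R]_n -> 'rV[R]_n)
  (hP1 : nearest_point_map C1 P1) (hP2 : nearest_point_map C2 P2)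
  (hP2c : continuous P2)
  (x0 : 'rV[R]_n) (hx0 : C1 x0)
  (xs ys : nat -> 'rV[R]_n)
  (hxs0 : xs 0%N = x0)
  (hys : forall i, ys i = P2 (xs i))
  (hxs : forall i, xs i.+1 = P1 (ys i)) :
  exists x y, C1 x /\ y = P2 x /\ C2 y /\
    (fun i => enorm (xs i - ys i)) @ \oo --> enorm (x - y).
Proof.
have hxC : forall i, C1 (xs i).
  by case=> [|i]; [rewrite hxs0 | rewrite hxs; case: (hP1 (ys i))].
set d := fun i => enorm (xs i - ys i).
have hdec : forall i, d i.+1 <= d i.
  move=> i; rewrite /d.
  have h1 : enorm (xs i.+1 - ys i.+1) <= enorm (xs i.+1 - ys i).
    rewrite hys; apply: (hP2 (xs i.+1)).2.
    by rewrite hys; case: (hP2 (xs i)).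
  apply: (le_trans h1).
  rewrite [X in X <= _]enormB_sym [X in _ <= X]enormB_sym hxs.
  exact: (hP1 (ys i)).2.
have hd : cvgn d.
  apply: nonincreasing_is_cvgn; first by apply/nonincreasing_seqP.
  by exists 0 => _ [m _ <-]; rewrite /d /enorm sqrtr_ge0.
set L := limn d.
have {}hd : d @ \oo --> L by exact: hd.
set f := fun z : 'rV[R]_n => enorm (z - P2 z).
have hfd : forall i, f (xs i) = d i by move=> i; rewrite /f /d hys.
have [x [Cx clx]] : exists x, C1 x /\ cluster (xs @ \oo) x.
  have := hC1 (xs @ \oo) (fmap_proper_filter xs eventually_filter).
  case; first by exists 0%N => // i _; exact: hxC.
  by move=> x [? ?]; exists x.
exists x, (P2 x); split => //; split => //; split; first by case: (hP2 x).
suff -> : enorm (x - P2 x) = L by [].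
apply/eqP; apply/negPn/negP => hne.
have hpos : 0 < `|f x - L| / 2.
  by rewrite divr_gt0 // normr_gt0 subr_eq0.
have hc := @f_cont R n P2 hP2c x.
move/cvgrPdist_lt : hc => /(_ _ hpos) hc.
move/cvgrPdist_lt : hd => /(_ _ hpos) hd'.
have hA : (xs @ \oo) [set z | `|L - f z| < `|f x - L| / 2].
  by apply: filterS hd' => i /=; rewrite hfd.
have [z [/= hz1 hz2]] := clx _ _ hA hc.
have := ler_distD (f z) (f x) L.
rewrite (distrC (f z) L).
lra.
Qed.
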